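(* Let $A$ be a synaptic algebra and let $p,q\in P$ be projections in generic position, i.e. $p\wedge q=p\wedge q^{\perp}=p^{\perp}\wedge q=p^{\perp}\wedge q^{\perp}=0$. Let $c:=(pqp+p^{\perp}q^{\perp}p^{\perp})^{1/2}$ and $s:=(pq^{\perp}p+p^{\perp}qp^{\perp})^{1/2}$, let $u$ be the symmetry of the polar decomposition of $p-q^{\perp}$ and $v$ the symmetry of the polar decomposition of $p-q$, and put $j:=uvp+pvu$. Then \[ q=c^{2}p+csj+s^{2}p^{\perp}, \] where $pqp=c^{2}p=pc^{2}$, $p^{\perp}qp^{\perp}=s^{2}p^{\perp}=p^{\perp}s^{2}$, $pqp^{\perp}+p^{\perp}qp=csj$, $c^{\circ}=s^{\circ}=1$, $j$ is a symmetry exchanging $p$ and $p^{\perp}$ (i.e. $jpj=p^{\perp}$), $cCs$, $cCj$, $sCj$, and $j\in CC(pqp^{\perp}+p^{\perp}qp)$.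
   Context: Synaptic algebra (Foulis): $R$ is a real linear associative algebra with unit $1$, and $A\subseteq R$ is a real linear subspace with $1\in A$. For $a,b\in A$ write $aCb$ iff $ab=ba$; $C(a):=\{b\in A: aCb\}$; $CC(a):=\{b\in A: bCd \text{ for all } d\in C(a)\}$. $A$ is a synaptic algebra with enveloping algebra $R$ iff: (SA1) $A$ is a partially ordered archimedean real linear space with positive cone $A^+$, $1$ is an order unit, and $\|\cdot\|$ is the corresponding order-unit norm; (SA2) $a\in A\Rightarrow a^2\in A^+$; (SA3) $a,b\in A^+\Rightarrow aba\in A^+$; (SA4) if $a\in A$, $b\in A^+$ and $aba=0$ then $ab=ba=0$; (SA5) if $a\in A^+$ there is $b\in A^+\cap CC(a)$ with $b^2=a$; (SA6) for $a\in A$ there is $p\in A$ with $p=p^2$ and, for all $b\in A$, $ab=0\Leftrightarrow pb=0$; (SA7) if $1\le a\in A$ there is $b\in A$ with $ab=ba=1$; (SA8) if $a,b\in A$, $a_1\le a_2\le\cdots$ are pairwise commuting elements of $C(b)$ and $\|a-a_n\|\to0$, then $a\in C(b)$. $A$ is nondegenerate ($1\ne0$). Products are computed in $R$. $P:=\{p\in A:p=p^2\}$ is the orthomodular lattice of projections (order inherited from $A$) with $p^{\perp}:=1-p$, meet $\wedge$, join $\vee$. For $0\le a$, $a^{1/2}$ is the unique positive square root in $A$, $|a|:=(a^2)^{1/2}$. The carrier $a^{\circ}$ of $a$ is the unique projection with $ab=0\Leftrightarrow a^{\circ}b=0$ for all $b\in A$. A symmetry is $u\in A$ with $u^2=1$.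 For $a\in A$, the signum $t$ of $a$ is the partial symmetry with $t^2=a^{\circ}$, $t\in CC(a)$, $a=|a|t=t|a|$; the symmetry of the polar decomposition of $a$ is $t+(a^{\circ})^{\perp}$. *)

(* Defs.v *)
From HB Require Import structures.
From mathcomp Require Import all_boot all_order all_algebra.
From mathcomp Require Import boolp classical_sets reals.
From Stdlib Require Import ClassicalEpsilon.
Set Implicit Arguments. Unset Strict Implicit. Unset Printing Implicit Defensive.
Import Order.TTheory GRing.Theory Num.Theory.
Local Open Scope ring_scope.

Definition ou_norm (R : realType) (E : algType R) (pos : E -> Prop) (x : E) : R :=
  inf [set l : R | 0 < l /\ pos (x - (- (l *: 1))) /\ pos (l *: 1 - x)].

(* A synaptic algebra A (given as a subset of its enveloping algebra E,
   a real unital associative algebra), with positive cone [sa_pos];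
   a <= b  iff  b - a is in the positive cone. *)
Record SynapticAlgebra (R : realType) (E : algType R) : Type := {
  sa_A : E -> Prop;
  sa_pos : E -> Prop;
  sa_A0 : sa_A 0;
  sa_A1 : sa_A 1;
  sa_AD : forall a b, sa_A a -> sa_A b -> sa_A (a + b);
  sa_AZ : forall (l : R) a, sa_A a -> sa_A (l *: a);
  sa_posA : forall a, sa_pos a -> sa_A a;
  sa_posD : forall a b, sa_pos a -> sa_pos b -> sa_pos (a + b);
  sa_posZ : forall (l : R) a, 0 <= l -> sa_pos a -> sa_pos (l *: a);
  sa_pos_antisym : forall a, sa_pos a -> sa_pos (- a) -> a = 0;
  sa_archimedean : forall a b, sa_A a -> sa_A b ->
      (forall n : nat, sa_pos (b - a *+ n)) -> sa_pos (- a);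
  sa_order_unit : forall a, sa_A a -> exists n : nat,
      sa_pos (a - (- (1 *+ n))) /\ sa_pos (1 *+ n - a);
  sa_SA2 : forall a, sa_A a -> sa_pos (a * a);
  sa_SA3 : forall a b, sa_pos a -> sa_pos b -> sa_pos (a * b * a);
  sa_SA4 : forall a b, sa_A a -> sa_pos b -> a * b * a = 0 ->
      a * b = 0 /\ b * a = 0;
  sa_SA5 : forall a, sa_pos a -> exists b, sa_pos b /\
      (forall d, sa_A d -> a * d = d * a -> b * d = d * b) /\ b * b = a;
  sa_SA6 : forall a, sa_A a -> exists p, sa_A p /\ p * p = p /\
      (forall b, sa_A b -> (a * b = 0 <-> p * b = 0));
  sa_SA7 : forall a, sa_A a -> sa_pos (a - 1) ->
      exists b, sa_A b /\ a * b = 1 /\ b * a = 1;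
  sa_SA8 : forall a b (an : nat -> E), sa_A a -> sa_A b ->
      (forall n, sa_A (an n)) ->
      (forall n, sa_pos (an n.+1 - an n)) ->
      (forall m n, an m * an n = an n * an m) ->
      (forall n, an n * b = b * an n) ->
      (forall eps : R, 0 < eps -> exists N, forall n, (N <= n)%N ->
          ou_norm sa_pos (a - an n) < eps) ->
      a * b = b * a;
  sa_nondeg : (1 : E) <> 0
}.

Section SynapticDefs.
Variables (R : realType) (E : algType R) (S : SynapticAlgebra E).

Definition inA (a : E) : Prop := sa_A S a.
Definition sle (a b : E) : Prop := sa_pos S (b - a).
Definition commutes (a b : E) : Prop := a * b = b * a.
Definition inC (a b : E) : Prop := inA b /\ commutes a b.
Definition inCC (a b : E) : Prop := inA b /\ forall d, inC a d -> commutes b d.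
Definition is_proj (p : E) : Prop := inA p /\ p * p = p.
Definition is_symmetry (u : E) : Prop := inA u /\ u * u = 1.
Definition perp (p : E) : E := 1 - p.
Definition is_meet (p q m : E) : Prop :=
  is_proj m /\ sle m p /\ sle m q /\
  forall r, is_proj r -> sle r p -> sle r q -> sle r m.

Definition ssqrt (a : E) : E :=
  epsilon (inhabits 0) (fun b => sa_pos S b /\ b * b = a).
Definition sabs (a : E) : E := ssqrt (a * a).
Definition carrier (a : E) : E :=
  epsilon (inhabits 0)
    (fun p => is_proj p /\ forall b, inA b -> (a * b = 0 <-> p * b = 0)).
Definition signum (a : E) : E :=
  epsilon (inhabits 0)
    (fun t => inA t /\ t * t = carrier a /\ inCC a t /\
              a = sabs a * t /\ a = t * sabs a).
Definition polar_sym (a : E) : E := signum a + perp (carrier a).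
End SynapticDefs.

(* Main.v *)
Require Import Defs.
From HB Require Import structures.
From mathcomp Require Import all_boot all_order all_algebra.
From mathcomp Require Import boolp classical_sets reals.
From Stdlib Require Import ClassicalEpsilon.
Import GRing.Theory Num.Theory.
Local Open Scope ring_scope.
Set Implicit Arguments. Unset Strict Implicit. Unset Printing Implicit Defensive.
Inductive zx := ZA of nat | ZP of zx & zx | ZN of zx | Z0.
Fixpoint zden {V : zmodType} (env : seq V) (t : zx) : V :=
  match t with ZA i => nth 0 env i | ZP a b => zden env a + zden env b
  | ZN a => - zden env a | Z0 => 0 end.
Fixpoint zco (t : zx) (i : nat) : int :=
  match t with ZA j => if i == j then 1 else 0 | ZP a b => zco a i + zco b i
  | ZN a => - zco a i | Z0 => 0 end.
Fixpoint zb (t : zx) : nat :=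
  match t with ZA j => j.+1 | ZP a b => maxn (zb a) (zb b) | ZN a => zb a | Z0 => 0 end.

Lemma zden_sum (V : zmodType) (env : seq V) t n : (zb t <= n)%N ->
  zden env t = \sum_(i < n) (nth 0 env i) *~ zco t i.
Proof.
elim: t => [j|a iha b ihb|a iha|] /=.
- move=> hj. rewrite (bigD1 (Ordinal hj)) //= eqxx mulr1z big1 ?addr0 //.
  by move=> i /negbTE; rewrite -val_eqE /= => ->.
- rewrite geq_max => /andP[ha hb]; rewrite iha // ihb // -big_split /=.
  by apply: eq_bigr => i _; rewrite mulrzDr.
- move=> h; rewrite iha // -sumrN; apply: eq_bigr => i _; by rewrite mulrNz.
- by move=> _; rewrite big1 // => i _; rewrite mulr0z.
Qed.

Lemma zsound (V : zmodType) (env : seq V) t1 t2 :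
  all (fun i => zco t1 i == zco t2 i) (iota 0 (maxn (zb t1) (zb t2))) ->
  zden env t1 = zden env t2.
Proof.
move=> /allP h.
rewrite (@zden_sum _ _ t1 (maxn (zb t1) (zb t2))) ?leq_maxl //.
rewrite (@zden_sum _ _ t2 (maxn (zb t1) (zb t2))) ?leq_maxr //.
apply: eq_bigr => i _; congr (_ *~ _); apply/eqP/h.
by rewrite mem_iota /= add0n ltn_ord.
Qed.

Ltac inlist x l :=
  lazymatch l with
  | ?y :: ?l' => match constr:(tt) with
                 | _ => let _ := constr:(@erefl _ x : x = y) in constr:(0%N)
                 | _ => let n := inlist x l' in constr:(S n)
                 end
  end.
Ltac add_atoms t l :=
  lazymatch t with
  | @GRing.add _ ?a ?b => let l1 := add_atoms a l in add_atoms b l1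
  | @GRing.opp _ ?a => add_atoms a l
  | @GRing.zero _ => l
  | _ => match constr:(tt) with
         | _ => let n := inlist t l in l
         | _ => constr:(t :: l)
         end
  end.
Ltac reify t l :=
  lazymatch t with
  | @GRing.add _ ?a ?b => let x := reify a l in let y := reify b l in constr:(ZP x y)
  | @GRing.opp _ ?a => let x := reify a l in constr:(ZN x)
  | @GRing.zero _ => constr:(Z0)
  | _ => let n := inlist t l in constr:(ZA n)
  end.
Ltac zsolve :=
  lazymatch goal with |- @eq ?T ?L ?R =>
    let l0 := add_atoms L (@nil T) in
    let l := add_atoms R l0 in
    let tl := reify L l in let tr := reify R l in
    change (zden l tl = zden l tr); apply: zsound; vm_compute; reflexivity
  end.


Lemma idl (E : pzRingType) (p : E) : p * p = p -> forall x, x * p * p = x * p.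
Proof. by move=> pp x; rewrite -mulrA pp. Qed.

Ltac expand0 :=
  rewrite ?(mulrDl, mulrDr, mulrBl, mulrBr, mul1r, mulr1, mulNr, mulrN, opprK, mulrA,
            mul0r, mulr0).
Ltac expand pp qq :=
  rewrite ?(mulrDl, mulrDr, mulrBl, mulrBr, mul1r, mulr1, mulNr, mulrN, opprK, mulrA,
            mul0r, mulr0, pp, qq, idl pp, idl qq).

Section SA.
Variables (R : realType) (E : algType R) (S : SynapticAlgebra E).
Local Notation A := (sa_A S).
Local Notation pos := (sa_pos S).

Lemma A0 : A 0. Proof. exact: sa_A0. Qed.
Lemma A1 : A 1. Proof. exact: sa_A1. Qed.
Lemma AD a b : A a -> A b -> A (a + b). Proof. exact: sa_AD. Qed.
Lemma AN a : A a -> A (- a). Proof. by move=> h; rewrite -scaleN1r; apply: sa_AZ. Qed.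
Lemma AB a b : A a -> A b -> A (a - b). Proof. by move=> ha hb; apply: AD ha (AN hb). Qed.
Lemma posA a : pos a -> A a. Proof. exact: sa_posA. Qed.
Lemma Asq a : A a -> A (a * a). Proof. by move=> h; apply/posA/sa_SA2. Qed.
Lemma pos1 : pos 1. Proof. by have := sa_SA2 (A1); rewrite mulr1. Qed.

Lemma mul2K (x : E) : x *+ 2 = 0 -> x = 0.
Proof.
move=> h; have -> : x = (2%:R : R)^-1 *: (x *+ 2).
  by rewrite -scaler_nat scalerA mulVf ?scale1r // pnatr_eq0.
by rewrite h scaler0.
Qed.

Lemma mul2I (x y : E) : x *+ 2 = y *+ 2 -> x = y.
Proof. by move=> h; apply/eqP; rewrite -subr_eq0; apply/eqP/mul2K; rewrite mulrnBl h subrr. Qed.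

Lemma A_half x : A (x *+ 2) -> A x.
Proof.
move=> h; have -> : x = (2%:R : R)^-1 *: (x *+ 2).
  by rewrite -scaler_nat scalerA mulVf ?scale1r // pnatr_eq0.
exact: sa_AZ.
Qed.

Lemma AJ a b : A a -> A b -> A (a * b + b * a).
Proof.
move=> ha hb; have -> : a * b + b * a = (a + b) * (a + b) - a * a - b * b.
  expand0; zsolve.
apply: AB; [apply: AB|]; apply: Asq => //; exact: AD.
Qed.

Lemma Acomm a b : A a -> A b -> a * b = b * a -> A (a * b).
Proof. by move=> ha hb h; apply: A_half; rewrite mulr2n {2}h; apply: AJ. Qed.

Lemma Aaba a b : A a -> A b -> A (a * b * a).
Proof.
move=> ha hb; apply: A_half.
have -> : (a * b * a) *+ 2 = (a * b + b * a) * a + a * (a * b + b * a) - ((a * a) * b + b * (a * a)).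
  rewrite mulr2n; expand0; zsolve.
by apply: AB; apply: AJ => //; [apply: AJ|apply: Asq].
Qed.

Lemma sq0 y : A y -> y * y = 0 -> y = 0.
Proof.
move=> hy h; have [h1 _] : y * 1 = 0 /\ 1 * y = 0.
  by apply: (sa_SA4 hy pos1); rewrite mulr1.
by rewrite -h1 mulr1.
Qed.

Lemma posP r : A r -> r * r = r -> pos r.
Proof. by move=> hr h; rewrite -h; apply: sa_SA2. Qed.


Lemma pos_antisym a : pos a -> pos (- a) -> a = 0.
Proof. exact: sa_pos_antisym. Qed.

Lemma pos_mulC a b : pos a -> pos b -> a * b = b * a -> pos (a * b).
Proof.
move=> pa pb ab; have [r [pr [rC rr]]] := sa_SA5 pa.
have rb : r * b = b * r := rC b (posA pb) ab.
have -> : a * b = r * b * r.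
  by rewrite -mulrA -rb mulrA rr.
exact: sa_SA3.
Qed.

Lemma sqrt_uniq a b1 b2 : pos b1 -> pos b2 -> b1 * b1 = a -> b2 * b2 = a ->
  (forall d, A d -> a * d = d * a -> b1 * d = d * b1) -> b1 = b2.
Proof.
move=> p1 p2 h1 h2 C1.
have A1' := posA p1; have A2 := posA p2.
have c12 : b1 * b2 = b2 * b1 by apply: C1 => //; rewrite -h2 mulrA.
pose z := b1 - b2.
have Az : A z := AB A1' A2.
have zb1 : z * b1 = b1 * z by rewrite /z mulrBl mulrBr c12.
have zb2 : z * b2 = b2 * z by rewrite /z mulrBl mulrBr c12.
have zs : z * (b1 + b2) = 0.
  rewrite /z mulrBl !mulrDr h1 h2 c12; zsolve.
pose w := z * z.
have pw : pos w := sa_SA2 Az.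
have wb1 : w * b1 = b1 * w by rewrite /w -mulrA zb1 !mulrA zb1.
have wb2 : w * b2 = b2 * w by rewrite /w -mulrA zb2 !mulrA zb2.
have q1 := pos_mulC pw p1 wb1; have q2 := pos_mulC pw p2 wb2.
have sum0 : w * b1 + w * b2 = 0 by rewrite -mulrDr /w -mulrA zs mulr0.
have e1 : w * b1 = 0.
  apply: pos_antisym q1 _.
  by have -> : - (w * b1) = w * b2 by apply/eqP; rewrite eq_sym -addr_eq0 addrC sum0.
have e2 : w * b2 = 0 by move: sum0; rewrite e1 add0r.
have wz : w * z = 0 by rewrite /z mulrBr e1 e2 subr0.
have w0 : w = 0.
  apply: sq0 (Asq Az) _.
  by rewrite mulrA -/w wz mul0r.
by apply/eqP; rewrite -subr_eq0; apply/eqP; apply: sq0 Az w0.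
Qed.

Lemma ssqrt_spec a : pos a -> pos (ssqrt S a) /\ ssqrt S a * ssqrt S a = a.
Proof.
move=> pa; have := @epsilon_spec E (inhabits 0) (fun b => pos b /\ b * b = a).
apply; have [b [pb [_ bb]]] := sa_SA5 pa; by exists b.
Qed.

Lemma ssqrt_CC a : pos a -> forall d, A d -> a * d = d * a ->
  ssqrt S a * d = d * ssqrt S a.
Proof.
move=> pa; have [b [pb [bC bb]]] := sa_SA5 pa.
have [ps ss] := ssqrt_spec pa.
have <- : b = ssqrt S a by apply: (sqrt_uniq pb ps bb ss bC).
exact: bC.
Qed.

Lemma carrier_spec a : A a ->
  (A (carrier S a) /\ carrier S a * carrier S a = carrier S a) /\
  forall b, A b -> (a * b = 0 <-> carrier S a * b = 0).
Proof.
move=> ha; have := @epsilon_spec E (inhabits 0)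
  (fun p => is_proj S p /\ forall b, inA S b -> (a * b = 0 <-> p * b = 0)).
apply; have [p [Ap [pp h]]] := sa_SA6 ha; by exists p.
Qed.

Lemma carrier1 a : A a -> (forall x, A x -> a * x = 0 -> x = 0) -> carrier S a = 1.
Proof.
move=> ha h; have [[Ar rr] hr] := carrier_spec ha.
have : 1 - carrier S a = 0.
  apply: h (AB A1 Ar) _; apply/(hr _ (AB A1 Ar)).
  by rewrite mulrBr mulr1 rr subrr.
by move/eqP; rewrite subr_eq0 => /eqP <-.
Qed.

Lemma carrier_r a : A a -> a * carrier S a = a.
Proof.
move=> ha; have [[Ar rr] hr] := carrier_spec ha.
have : a * (1 - carrier S a) = 0.
  by apply/(hr _ (AB A1 Ar)); rewrite mulrBr mulr1 rr subrr.
by rewrite mulrBr mulr1 => /eqP; rewrite subr_eq0 => /eqP <-.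
Qed.

Lemma carrier_l a : A a -> carrier S a * a = a.
Proof.
move=> ha; have [[Ar rr] hr] := carrier_spec ha.
have ar : a * (1 - carrier S a) = 0 by rewrite mulrBr mulr1 carrier_r // subrr.
pose w := (1 - carrier S a) * a.
have Aw : A w.
  have -> : w = (1 - carrier S a) * a + a * (1 - carrier S a) by rewrite ar addr0.
  by apply: AJ => //; apply: AB A1 Ar.
have : w = 0.
  apply: sq0 Aw _.
  have -> : w * w = (1 - carrier S a) * (a * (1 - carrier S a)) * a
    by rewrite /w !mulrA.
  by rewrite ar mulr0 mul0r.
by rewrite /w mulrBl mul1r => /eqP; rewrite subr_eq0 => /eqP <-.
Qed.

Lemma carrier_CC a : A a -> forall x, A x -> a * x = x * a ->
  carrier S a * x = x * carrier S a.
Proof.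
move=> ha x hx ax; have [[Ar rr] hr] := carrier_spec ha.
set r := carrier S a in Ar rr hr *.
have ar : a * (1 - r) = 0 by rewrite mulrBr mulr1 /r carrier_r // subrr.
have r1r : r * (1 - r) = 0 by rewrite mulrBr mulr1 rr subrr.
have A1r : A (1 - r) := AB A1 Ar.
have H1 : r * x * (1 - r) = 0.
  have : a * (x * (1 - r) + (1 - r) * x) = 0.
    by rewrite mulrDr !mulrA ax -(mulrA x a) ar mulr0 mul0r addr0.
  move/(hr _ (AJ hx A1r)); by rewrite mulrDr !mulrA r1r mul0r addr0.
pose z := r * x * (1 - r) + (1 - r) * x * r.
have Az : A z.
  have -> : z = (r * x + x * r) - (r * x * r) *+ 2.
    by rewrite /z mulr2n; expand rr rr; zsolve.
  apply: AB; first exact: AJ.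
  by rewrite mulr2n; apply: AD; apply: Aaba.
have H2 : (1 - r) * x * r = 0.
  have : z = 0.
    apply: sq0 Az _.
    have -> : z * z = (1 - r) * x * (r * (1 - r)) * x * r.
      by rewrite /z H1 add0r !mulrA.
    by rewrite r1r mulr0 !mul0r.
  by rewrite /z H1 add0r.
have h1 : r * x = r * x * r.
  by apply/eqP; rewrite -subr_eq0; apply/eqP; rewrite -H1; expand rr rr.
have h2 : x * r = r * x * r.
  by apply/eqP; rewrite -subr_eq0; apply/eqP; rewrite -H2; expand rr rr.
by rewrite h1 h2.
Qed.

Lemma perp_proj p : is_proj S p -> is_proj S (perp p).
Proof.
move=> [Ap pp]; split; first exact: AB A1 Ap.
by rewrite /perp; expand pp pp; zsolve.
Qed.

Lemma perpK (p : E) : perp (perp p) = p.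
Proof. by rewrite /perp subKr. Qed.

Lemma proj_le r P : is_proj S r -> is_proj S P -> r * P = r -> sle S r P.
Proof.
move=> [Ar rr] [AP PP] rP.
have Pr : P * r = r.
  have [_ h] : r * (1 - P) = 0 /\ (1 - P) * r = 0.
    apply: (sa_SA4 Ar).
      by apply: posP; [exact: AB A1 AP|expand PP PP; zsolve].
    by expand PP rr; rewrite rP rr; zsolve.
  by move: h; rewrite mulrBl mul1r => /eqP; rewrite subr_eq0 => /eqP <-.
rewrite /sle; apply: posP; first exact: AB AP Ar.
by expand PP rr; rewrite Pr rP; zsolve.
Qed.

Lemma side P T k : is_proj S P -> is_proj S T -> is_proj S k -> is_meet S P T 0 ->
  P * k = T * k -> k * P = k * T -> P * k = 0.
Proof.
move=> [AP PP] [AT TT] [Ak kk] [_ [_ [_ hm]]] e1 e2.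
have Ay : A (P * k * P) := Aaba AP Ak.
have [[Ar rr] hr] := carrier_spec Ay.
set r := carrier S _ in Ar rr hr.
have rP : r * P = r.
  have : P * k * P * (1 - P) = 0 by expand PP PP; zsolve.
  move/(hr _ (AB A1 AP)) => h.
  by apply/eqP; rewrite eq_sym -subr_eq0 -[X in X - _]mulr1 -mulrBr h.
have rT : r * T = r.
  have : P * k * P * (1 - T) = 0.
    by rewrite -(mulrA P k P) e2 mulrA mulrBr mulr1 -(mulrA _ T T) TT subrr.
  move/(hr _ (AB A1 AT)) => h.
  by apply/eqP; rewrite eq_sym -subr_eq0 -[X in X - _]mulr1 -mulrBr h.
have r0 : r = 0.
  have := hm r (conj Ar rr) (proj_le (conj Ar rr) (conj AP PP) rP)
                            (proj_le (conj Ar rr) (conj AT TT) rT).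
  rewrite /sle sub0r => h; apply: pos_antisym h.
  exact: posP.
have y0 : P * k * P = 0.
  have : r * 1 = 0 by rewrite r0 mul0r.
  by move/(hr _ A1); rewrite mulr1.
have [h _] := sa_SA4 AP (posP Ak kk) y0.
exact: h.
Qed.

Lemma kern P T : is_proj S P -> is_proj S T -> is_meet S P T 0 ->
  is_meet S (perp P) (perp T) 0 ->
  forall x, A x -> (P - T) * x = 0 -> x = 0.
Proof.
move=> hP hT m1 m2.
have [AP PP] := hP; have [AT TT] := hT.
have Aa : A (P - T) := AB AP AT.
have [[Ar rr] hr] := carrier_spec Aa.
suff r1 : carrier S (P - T) = 1.
  by move=> x hx /(hr _ hx); rewrite r1 mul1r.
set r := carrier S _ in Ar rr hr *.
pose k := 1 - r.
have hk : is_proj S k := perp_proj (conj Ar rr).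
have Ak : A k := hk.1.
have ak : (P - T) * k = 0 by apply/(hr _ Ak); rewrite /k mulrBr mulr1 rr subrr.
have ka : k * (P - T) = 0.
  have [_ h] : (P - T) * k = 0 /\ k * (P - T) = 0.
    by apply: (sa_SA4 Aa (posP Ak hk.2)); rewrite ak mul0r.
  exact: h.
have e1 : P * k = T * k by move/eqP: ak; rewrite mulrBl subr_eq0 => /eqP.
have e2 : k * P = k * T by move/eqP: ka; rewrite mulrBr subr_eq0 => /eqP.
have Pk : P * k = 0 := side hP hT hk m1 e1 e2.
have Pk' : perp P * k = 0.
  apply: (side (perp_proj hP) (perp_proj hT) hk m2).
    by rewrite /perp !mulrBl e1.
  by rewrite /perp !mulrBr e2.
have : k = 0 by move: Pk'; rewrite /perp mulrBl mul1r Pk subr0.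
by rewrite /k => /eqP; rewrite subr_eq0 => /eqP <-.
Qed.

Lemma ann_sq a : A a -> (forall x, A x -> a * x = 0 -> x = 0) ->
  forall x, A x -> a * a * x = 0 -> x = 0.
Proof.
move=> ha h x hx e.
have xa : x * (a * a) = 0.
  have [h1 _] : x * (a * a) = 0 /\ (a * a) * x = 0.
    by apply: (sa_SA4 hx (sa_SA2 ha)); rewrite -mulrA e mulr0.
  exact: h1.
pose w := x * x.
have pw : pos w := sa_SA2 hx.
have aaw : a * a * w = 0 by rewrite /w mulrA e mul0r.
have awa : a * w * a = 0.
  apply: sq0; first exact: Aaba ha (posA pw).
  have -> : a * w * a * (a * w * a) = a * w * (a * a * w) * a by rewrite !mulrA.
  by rewrite aaw mulr0 mul0r.
have [h1 _] := sa_SA4 ha pw awa.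
have w0 : w = 0 := h w (posA pw) h1.
exact: sq0 hx w0.
Qed.

Lemma polar a : A a -> (forall x, A x -> a * x = 0 -> x = 0) ->
  pos (ssqrt S (a * a)) /\ ssqrt S (a * a) * ssqrt S (a * a) = a * a /\
  (forall d, A d -> a * a * d = d * (a * a) -> ssqrt S (a * a) * d = d * ssqrt S (a * a)) /\
  A (polar_sym S a) /\ polar_sym S a * polar_sym S a = 1 /\
  (forall x, A x -> a * x = x * a -> polar_sym S a * x = x * polar_sym S a) /\
  a = ssqrt S (a * a) * polar_sym S a /\ a = polar_sym S a * ssqrt S (a * a).
Proof.
move=> ha hann.
have ca1 : carrier S a = 1 := carrier1 ha hann.
have pa2 : pos (a * a) := sa_SA2 ha.
have [pc cc] := ssqrt_spec pa2.
have cC := ssqrt_CC pa2.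
set c := ssqrt S (a * a) in pc cc cC *.
have Ac : A c := posA pc.
have ca : c * a = a * c by apply: cC => //; rewrite mulrA.
suff : inA S (signum S a) /\ signum S a * signum S a = carrier S a /\
       inCC S a (signum S a) /\ a = sabs S a * signum S a /\ a = signum S a * sabs S a.
  rewrite /polar_sym ca1 /perp subrr addr0 /sabs -/c.
  move=> [Au [uu [[_ uC] [e1 e2]]]].
  do 7 (try split) => //.
  by move=> x hx ax; apply: uC.
have := @epsilon_spec E (inhabits 0) (fun t => inA S t /\ t * t = carrier S a /\
   inCC S a t /\ a = sabs S a * t /\ a = t * sabs S a).
apply; rewrite /sabs -/c ca1.
have Ap : A (c + a) := AD Ac ha.
have Am : A (c - a) := AB Ac ha.
have [[AP PP] hP] := carrier_spec Ap.
have [[AN NN] hN] := carrier_spec Am.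
set P := carrier S (c + a) in AP PP hP *.
set N := carrier S (c - a) in AN NN hN *.
have pm : (c + a) * (c - a) = 0 by expand0; rewrite cc ca; zsolve.
have mp : (c - a) * (c + a) = 0 by expand0; rewrite cc ca; zsolve.
have Pm : P * (c - a) = 0 by apply/(hP _ Am).
have mP : (c - a) * P = 0.
  by rewrite -(carrier_CC Ap Am); [exact: Pm| rewrite pm mp].
have Np : N * (c + a) = 0 by apply/(hN _ Ap).
have pN : (c + a) * N = 0.
  by rewrite -(carrier_CC Am Ap); [exact: Np| rewrite pm mp].
have NP : N * P = 0 by apply/(hN _ AP).
have PN : P * N = 0 by apply/(hP _ AN).
have cP : c * P = a * P by move/eqP: mP; rewrite mulrBl subr_eq0 => /eqP.
have cN : c * N = - (a * N) by move/eqP: pN; rewrite mulrDl addr_eq0 => /eqP.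
have pP : (c + a) * P = c + a := carrier_r Ap.
have mN : (c - a) * N = c - a := carrier_r Am.
have PN1 : P + N = 1.
  have Ax : A (1 - P - N) := AB (AB A1 AP) AN.
  have e1 : (c + a) * (1 - P - N) = 0 by rewrite !mulrBr mulr1 pP pN subrr subr0.
  have e2 : (c - a) * (1 - P - N) = 0 by rewrite !mulrBr mulr1 mP mN subr0 subrr.
  have : a * (1 - P - N) = 0.
    apply: mul2K.
    have -> : (a * (1 - P - N)) *+ 2 = (c + a) * (1 - P - N) - (c - a) * (1 - P - N).
      by rewrite mulr2n; rewrite [in RHS]mulrDl [in RHS]mulrBl; zsolve.
    by rewrite e1 e2 subrr.
  by move/(hann _ Ax)/eqP; rewrite -addrA -opprD subr_eq0 => /eqP <-.
have Pc : P * c = c * P.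
  by apply: (carrier_CC Ap Ac); rewrite mulrDl mulrDr ca.
have Nc : N * c = c * N.
  by apply: (carrier_CC Am Ac); rewrite mulrBl mulrBr ca.
have At : A (P - N) := AB AP AN.
exists (P - N).
split; first exact: At.
split.
  by expand PP NN; rewrite PN NP oppr0 addr0 add0r.
have ect : a = c * (P - N).
  by rewrite mulrBr cP cN opprK -mulrDr PN1 mulr1.
split.
  split => // d [hd ad].
  have add : a * a * d = d * (a * a) by rewrite -mulrA ad !mulrA ad.
  have cd := cC d hd add.
  have pd : (c + a) * d = d * (c + a) by rewrite mulrDl mulrDr cd ad.
  have md : (c - a) * d = d * (c - a) by rewrite mulrBl mulrBr cd ad.
  rewrite /commutes mulrBl mulrBr (carrier_CC Ap hd pd) (carrier_CC Am hd md).
  done.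
split => //.
by rewrite mulrBl Pc Nc -mulrBr.
Qed.
End SA.

Lemma swapx (E : pzRingType) (x a b : E) : a * b = b * a -> x * a * b = x * b * a.
Proof. by move=> h; rewrite -mulrA h mulrA. Qed.
Lemma cancx (E : pzRingType) (x a : E) : a * a = 1 -> x * a * a = x.
Proof. by move=> h; rewrite -mulrA h mulr1. Qed.
Lemma antix (E : pzRingType) (x a b : E) : a * b = - (b * a) -> x * a * b = - (x * b * a).
Proof. by move=> h; rewrite -mulrA h mulrN mulrA. Qed.


Section Ids.
Variables (R : realType) (E : algType R) (S : SynapticAlgebra E) (p q : E).
Hypotheses (pp : p * p = p) (qq : q * q = q).
Let e := p - perp q.
Let d := p - q.
Lemma I1 : p * q * p + perp p * perp q * perp p = e * e.
Proof. by rewrite /e /perp; expand pp qq; zsolve. Qed.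
Lemma I2 : p * perp q * p + perp p * q * perp p = d * d.
Proof. by rewrite /d /perp; expand pp qq; zsolve. Qed.
Lemma I3 : e * e + d * d = 1.
Proof. by rewrite /e /d /perp; expand pp qq; zsolve. Qed.
Lemma I4 : d * d * p = p * (d * d).
Proof. by rewrite /e /d /perp; expand pp qq; zsolve. Qed.
Lemma I5 : d * d * q = q * (d * d).
Proof. by rewrite /e /d /perp; expand pp qq; zsolve. Qed.
Lemma I6 : d * e = - (e * d).
Proof. by rewrite /e /d /perp; expand pp qq; zsolve. Qed.
Lemma I7 : p *+ 2 = 1 + d + e.
Proof. by rewrite /e /d /perp mulr2n; zsolve. Qed.
Lemma I8 : p * q * p = e * e * p.
Proof. by rewrite /e /d /perp; expand pp qq; zsolve. Qed.
Lemma I9 : perp p * q * perp p = d * d * perp p.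
Proof. by rewrite /e /d /perp; expand pp qq; zsolve. Qed.
Lemma I10 : p * q * perp p + perp p * q * p = d * d * e - e * e * d.
Proof. by rewrite /e /d /perp; expand pp qq; zsolve. Qed.
Lemma I11 : q = e * e * p + (d * d * e - e * e * d) + d * d * perp p.
Proof. by rewrite /e /d /perp; expand pp qq; zsolve. Qed.
Lemma I12 : perp p *+ 2 = 1 - d - e.
Proof. by rewrite /e /d /perp mulr2n; zsolve. Qed.
Lemma I13 : d * d * e = e * (d * d).
Proof. by rewrite /e /d /perp; expand pp qq; zsolve. Qed.
Lemma I14 : e * e * d = d * (e * e).
Proof. by rewrite /e /d /perp; expand pp qq; zsolve. Qed.
Lemma I15 : e * e * p = p * (e * e).
Proof. by rewrite /e /d /perp; expand pp qq; zsolve. Qed.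
Lemma I16 : d * d * perp p = perp p * (d * d).
Proof. by rewrite /e /d /perp; expand pp qq; zsolve. Qed.
End Ids.
Ltac cnorm0 uc vc us vs sc uu vv :=
  rewrite ?(mulrDl, mulrDr, mulrBl, mulrBr, mul1r, mulr1, mulNr, mulrN, opprK, mulrA,
            mul0r, mulr0, uc, vc, us, vs, sc, uu, vv, swapx _ uc, swapx _ vc,
            swapx _ us, swapx _ vs, swapx _ sc, cancx _ uu, cancx _ vv).

Ltac cnorm uc vc us vs sc uu vv vu :=
  rewrite ?(mulrDl, mulrDr, mulrBl, mulrBr, mul1r, mulr1, mulNr, mulrN, opprK, mulrA,
            mul0r, mulr0, uc, vc, us, vs, sc, uu, vv, vu, swapx _ uc, swapx _ vc,
            swapx _ us, swapx _ vs, swapx _ sc, cancx _ uu, cancx _ vv, antix _ vu).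

Theorem theorem7p8 (R : realType) (E : algType R) (S : SynapticAlgebra E)
  (p q : E) :
  is_proj S p -> is_proj S q ->
  is_meet S p q 0 -> is_meet S p (perp q) 0 ->
  is_meet S (perp p) q 0 -> is_meet S (perp p) (perp q) 0 ->
  let c := ssqrt S (p * q * p + perp p * perp q * perp p) in
  let s := ssqrt S (p * perp q * p + perp p * q * perp p) in
  let u := polar_sym S (p - perp q) in
  let v := polar_sym S (p - q) in
  let j := u * v * p + p * v * u in
  (q = c ^+ 2 * p + c * s * j + s ^+ 2 * perp p) /\
  (p * q * p = c ^+ 2 * p /\ c ^+ 2 * p = p * c ^+ 2) /\
  (perp p * q * perp p = s ^+ 2 * perp p /\ s ^+ 2 * perp p = perp p * s ^+ 2) /\
  (p * q * perp p + perp p * q * p = c * s * j) /\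
  (carrier S c = 1 /\ carrier S s = 1) /\
  (is_symmetry S j /\ j * p * j = perp p) /\
  (inC S c s /\ inC S c j /\ inC S s j) /\
  inCC S (p * q * perp p + perp p * q * p) j.
Proof.
move=> [Ap pp] [Aq qq] m1 m2 m3 m4 c s u v j.
have m3' : is_meet S (perp p) (perp (perp q)) 0 by rewrite perpK.
have Apq : sa_A S (perp q) := AB (@A1 _ _ S) Aq.
have Ae : sa_A S (p - perp q) := AB Ap Apq.
have Ad : sa_A S (p - q) := AB Ap Aq.
have kd := kern (conj Ap pp) (conj Aq qq) m1 m4.
have ke := kern (conj Ap pp) (perp_proj (conj Aq qq)) m2 m3'.
have [pc [cc [cC [Au [uu [uC [ecu euc]]]]]]] := polar Ae ke.
have [ps [ss [sC [Av [vv [vC [dsv dvs]]]]]]] := polar Ad kd.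
rewrite -(I1 pp qq) -/c -/u in pc cc cC Au uu uC ecu euc.
rewrite -(I2 pp qq) -/s -/v in ps ss sC Av vv vC dsv dvs.
rewrite (I1 pp qq) in cc cC.
rewrite (I2 pp qq) in ss sC.
have I3' := I3 pp qq. have I4' := I4 pp qq. have I5' := I5 pp qq.
have I6' := I6 pp qq. have I7' := I7 p q. have I8' := I8 pp qq.
have I9' := I9 pp qq. have I10' := I10 pp qq. have I11' := I11 pp qq.
have I12' := I12 p q.
have ddE := I13 pp qq. have eeD := I14 pp qq. have I15' := I15 pp qq. have I16' := I16 pp qq.
set e := p - perp q in Ae ke cc cC uC ecu euc I3' I6' I7' I8' I10' I11' I12' ddE eeD I15'.
set d := p - q in Ad kd ss sC vC dsv dvs I3' I4' I5' I6' I7' I9' I10' I11' I12' ddE eeD I16'.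
have Ac : sa_A S c := posA pc.
have As : sa_A S s := posA ps.
have ee : e * e = 1 - d * d by rewrite -I3' addrK.
have cd : c * d = d * c := cC d Ad eeD.
have vc : v * c = c * v := vC c Ac (esym cd).
have se : s * e = e * s := sC e Ae ddE.
have us : u * s = s * u := uC s As (esym se).
have sc : s * c = c * s.
  apply: sC Ac _.
  by rewrite -mulrA -cd mulrA -cd -mulrA.
have uc : u * c = c * u by rewrite -euc ecu.
have vs : v * s = s * v by rewrite -dvs dsv.
have jdef : j = u * v * p + p * v * u by [].
clearbody c s u v j e d.
have de' : d * e = c * s * v * u.
  by rewrite {1}dsv {1}ecu; cnorm0 uc vc us vs sc uu vv.
have ed' : e * d = c * s * u * v.
  by rewrite {1}dsv {1}ecu; cnorm0 uc vc us vs sc uu vv.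
have ann_c : forall y, sa_A S y -> c * y = 0 -> y = 0.
  by move=> y hy h; apply: (ann_sq Ae ke hy); rewrite -cc -mulrA h mulr0.
have ann_s : forall y, sa_A S y -> s * y = 0 -> y = 0.
  by move=> y hy h; apply: (ann_sq Ad kd hy); rewrite -ss -mulrA h mulr0.
have uvvu : u * v + v * u = 0.
  have AJ' : sa_A S (u * v + v * u) := AJ Au Av.
  have Ax : sa_A S (s * (u * v + v * u)).
    by apply: Acomm As AJ' _; cnorm0 uc vc us vs sc uu vv.
  apply: ann_s AJ' _; apply: ann_c Ax _.
  by rewrite mulrA mulrDr !mulrA -ed' -de' I6' addrN.
have vu : v * u = - (u * v) by apply/eqP; rewrite -addr_eq0 addrC uvvu.
have jE : j = s * u - c * v.
  apply: mul2I.
  have -> : j *+ 2 = u * v * (p *+ 2) + (p *+ 2) * v * u.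
    by rewrite jdef mulrnDl mulrnAr !mulrnAl.
  rewrite I7' dsv ecu; cnorm uc vc us vs sc uu vv vu.
  by rewrite mulr2n; zsolve.
have Aj : sa_A S j.
  by rewrite jE; apply: AB; apply: Acomm => //; rewrite ?us ?vc.
have jj : j * j = 1.
  rewrite jE; cnorm uc vc us vs sc uu vv vu.
  rewrite ss cc -I3'; zsolve.
have jde : j * (d + e) = - ((d + e) * j).
  by rewrite jE dsv ecu; cnorm uc vc us vs sc uu vv vu; zsolve.
have jpj : j * p * j = perp p.
  apply: mul2I.
  rewrite -mulrnAl -mulrnAr I7' I12' -addrA mulrDr mulr1 mulrDl jj jde mulNr -mulrA jj mulr1.
  zsolve.
have csj : c * s * j = d * d * e - e * e * d.
  by rewrite jE dsv ecu; cnorm uc vc us vs sc uu vv vu; zsolve.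
have cj : c * j = j * c.
  by rewrite jE; cnorm uc vc us vs sc uu vv vu; zsolve.
have sj : s * j = j * s.
  by rewrite jE; cnorm uc vc us vs sc uu vv vu; zsolve.
have gpos : sa_pos S (c * s) := pos_mulC pc ps (esym sc).
have Ag : sa_A S (c * s) := posA gpos.
have ann_g : forall y, sa_A S y -> c * s * y = 0 -> y = 0.
  move=> y hy h.
  have pw : sa_pos S (y * y) := sa_SA2 hy.
  have gw : c * s * (y * y) = 0 by rewrite mulrA h mul0r.
  have sws : s * (y * y) * s = 0.
    apply: ann_c; first exact: Aaba As (posA pw).
    have -> : c * (s * (y * y) * s) = c * s * (y * y) * s by rewrite !mulrA.
    by rewrite gw mul0r.
  have [h1 _] := sa_SA4 As pw sws.
  exact: sq0 hy (ann_s _ (posA pw) h1).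
split; first by rewrite !expr2 csj cc ss.
split; first by rewrite !expr2 cc.
split; first by rewrite !expr2 ss.
split; first by rewrite csj.
split; first by split; apply: carrier1.
split; first by split.
split; first by do !split => //; rewrite /commutes ?sc.
split => // x [hx kx].
rewrite /commutes I10' -csj in kx.
have kk : c * s * j * (c * s * j) = c * s * (c * s).
  have gj : c * s * j = j * (c * s) by rewrite -mulrA sj mulrA cj -mulrA.
  by rewrite -mulrA (mulrA j) -gj -(mulrA _ j j) jj mulr1.
have [b [pb [bC bb]]] := sa_SA5 (sa_SA2 Ag).
have bg : b = c * s := sqrt_uniq pb gpos bb (erefl _) bC.
have gx : c * s * x = x * (c * s).
  rewrite -bg; apply: bC hx _.
  have gen : forall k, k * x = x * k -> k * k * x = x * (k * k).
    by move=> k hk; rewrite -mulrA hk mulrA hk -mulrA.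
  by rewrite -kk; apply: gen kx.
have w0 : j * x * j - x = 0.
  apply: ann_g; first exact: AB (Aaba Aj hx) hx.
  rewrite mulrBr !mulrA kx gx -(mulrA x (c * s * j) j) -(mulrA (c * s) j j) jj mulr1.
  by rewrite subrr.
have h : j * x * j = x by apply/eqP; rewrite -subr_eq0 w0.
by rewrite /commutes -{1}h !mulrA jj mul1r.
Qed.
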